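(* Assume $f\in C^{m+1}[-1,1]$ and $\max_{|x|\le1}|f^{(m+1)}(x)|\le A$ for a constant $A>0$ independent of $m$. For each arbitrary integration node $x_k\in[-1,1]$, let $\int_{-1}^{x_k}f(x)\,dx$ be approximated by the optimal barycentric Gegenbauer quadrature $\sum_{i=0}^m p_{OB,k,i}^{(1)}f(z_{m,k,i}^{(\alpha_k^* )})$. Then, as $m\to\infty$, the optimal barycentric Gegenbauer quadrature converges to the barycentric Chebyshev quadrature, in the sense that for every $k$, $$\sum_{i=0}^m p_{OB,k,i}^{(1)}\,f\big(z_{m,k,i}^{(\alpha_k^* )}\big)-\sum_{i=0}^m p_{B,k,i}^{(1)}\,f\big(x_{m,i}^{(0)}\big)\longrightarrow 0\quad(m\to\infty).$$
   Context: For $\alpha>-1/2$ and integer $n\ge0$, the Gegenbauer polynomial $G_n^{(\alpha)}$ is the Jacobi polynomial $P_n^{(\alpha-1/2,\alpha-1/2)}$ normalized so that $G_n^{(\alpha)}(1)=1$ (for $\alpha=0$ this is the Chebyshev polynomial $T_n$); $K_n^{(\alpha)}$ denotes its leading coefficient. For a node $x_k$, $\eta_{k,m}(\alpha)=\frac{2^m}{K_{m+1}^{(\alpha)}}\int_{-1}^{x_k}G_{m+1}^{(\alpha)}(x)\,dx$, $\alpha_k^*=\operatorname{argmin}_{\alpha>-1/2}\eta_{k,m}^2(\alpha)$, the adjoint GG nodes $z_{m,k,i}^{(\alpha_k^* )}$, $i=0,\dots,m$, are the zeros of $G_{m+1}^{(\alpha_k^* )}$, and $p_{OB,k,i}^{(1)}=\int_{-1}^{x_k}\ell_{k,i}(x)\,dx$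 with $\ell_{k,i}$ the degree-$m$ Lagrange basis polynomial at these nodes. The Chebyshev–Gauss nodes $x_{m,i}^{(0)}$, $i=0,\dots,m$, are the zeros of $T_{m+1}$, and $p_{B,k,i}^{(1)}=\int_{-1}^{x_k}\ell_i^{(0)}(x)\,dx$ with $\ell_i^{(0)}$ the degree-$m$ Lagrange basis polynomial at the Chebyshev–Gauss nodes. *)

(* Defs.v *)
From Stdlib Require Import Reals Lra ClassicalEpsilon.
Open Scope R_scope.

Fixpoint rising (a : R) (j : nat) : R :=
  match j with
  | O => 1
  | S j' => rising a j' * (a + INR j')
  end.

(* Gegenbauer polynomial G_n^{(alpha)} = P_n^{(alpha-1/2,alpha-1/2)} / P_n^{(alpha-1/2,alpha-1/2)}(1),
   written via the standard explicit Jacobi formula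
   P_n^{(a,b)}(x)/P_n^{(a,b)}(1) = sum_j C(n,j) (a+b+n+1)_j/(a+1)_j ((x-1)/2)^j
   with a = b = alpha - 1/2. *)
Definition Gegen (n : nat) (alpha x : R) : R :=
  sum_f_R0 (fun j => C n j * rising (2 * alpha + INR n) j
                     / rising (alpha + / 2) j * ((x - 1) / 2) ^ j) n.

(* leading coefficient K_n^{(alpha)} of Gegen n alpha (coefficient of x^n,
   coming only from the j = n term above) *)
Definition Klead (n : nat) (alpha : R) : R :=
  rising (2 * alpha + INR n) n / (rising (alpha + / 2) n * 2 ^ n).

(* Riemann integral of f from a to b (the value of RiemannInt when f is
   Riemann integrable; all integrands used here are polynomials). *)
Definition Rint (f : R -> R) (a b : R) : R :=
  epsilon (inhabits 0)
    (fun I => exists pr : Riemann_integrable f a b, RiemannInt pr = I).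

Definition eta (m : nat) (alpha xk : R) : R :=
  2 ^ m / Klead (S m) alpha * Rint (Gegen (S m) alpha) (-1) xk.

Definition is_argmin_eta (m : nat) (xk a : R) : Prop :=
  -1/2 < a /\ forall b, -1/2 < b -> (eta m a xk) ^ 2 <= (eta m b xk) ^ 2.

Definition zeros_of (n : nat) (alpha : R) (z : nat -> R) : Prop :=
  (forall i j, (i < n)%nat -> (j < n)%nat -> i <> j -> z i <> z j) /\
  (forall i, (i < n)%nat -> Gegen n alpha (z i) = 0).

Definition lagrange (z : nat -> R) (m i : nat) (x : R) : R :=
  prod_f_R0 (fun j => if Nat.eq_dec j i then 1 else (x - z j) / (z i - z j)) m.

Definition qweight (z : nat -> R) (m i : nat) (xk : R) : R :=
  Rint (lagrange z m i) (-1) xk.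

Definition deriv_on (g dg : R -> R) : Prop :=
  forall x, -1 <= x <= 1 ->
    limit1_in (fun y => (g y - g x) / (y - x))
              (fun y => -1 <= y <= 1 /\ y <> x) (dg x) x.

(* Main.v *)
Require Import Defs.
From Stdlib Require Import Reals Lra Lia Psatz List Sorted Permutation ClassicalEpsilon.
Import ListNotations.
Open Scope R_scope.


Definition Hs (n : nat) (b c u : R) : R :=
  sum_f_R0 (fun j => Binomial.C n j * rising b j / rising c j * u ^ j) n.

Lemma Gegen_Hs n al x : Gegen n al x = Hs n (2 * al + INR n) (al + / 2) ((x - 1) / 2).
Proof. reflexivity. Qed.

Lemma rising_pos a j : 0 < a -> 0 < rising a j.
Proof.
  intro Ha; induction j as [|j IH]; simpl. lra.
  apply Rmult_lt_0_compat; auto. pose proof (pos_INR j); lra.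
Qed.

Lemma rising_nn a j : 0 <= a -> 0 <= rising a j.
Proof.
  intro Ha; induction j as [|j IH]; simpl. lra.
  apply Rmult_le_pos; auto. pose proof (pos_INR j); lra.
Qed.

Lemma rising_S b j : rising b (S j) = b * rising (b + 1) j.
Proof.
  induction j as [|j IH]. simpl. ring.
  change (rising b (S (S j))) with (rising b (S j) * (b + INR (S j))).
  rewrite IH. change (rising (b+1) (S j)) with (rising (b+1) j * (b + 1 + INR j)).
  rewrite S_INR. ring.
Qed.

Lemma rising_neg k a : a + INR k < 0 -> 0 < (-1) ^ (S k) * rising a (S k).
Proof.
  revert a; induction k as [|k IH]; intros a Ha.
  - simpl in *. lra.
  - change (rising a (S (S k))) with (rising a (S k) * (a + INR (S k))).
    rewrite S_INR in Ha.
    assert (H := IH a ltac:(lra)).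
    replace ((-1) ^ S (S k) * (rising a (S k) * (a + INR (S k))))
      with (((-1) ^ S k * rising a (S k)) * (- (a + INR (S k)))) by (simpl; ring).
    apply Rmult_lt_0_compat; auto. rewrite S_INR; lra.
Qed.

Lemma C_n_0 n : Binomial.C n 0 = 1.
Proof. unfold Binomial.C. rewrite Nat.sub_0_r. simpl. field. apply INR_fact_neq_0. Qed.

Lemma C_n_n n : Binomial.C n n = 1.
Proof. unfold Binomial.C. rewrite Nat.sub_diag. simpl. field. apply INR_fact_neq_0. Qed.

Lemma C_nn n j : 0 <= Binomial.C n j.
Proof.
  unfold Binomial.C. unfold Rdiv. apply Rmult_le_pos. apply pos_INR.
  left; apply Rinv_0_lt_compat, Rmult_lt_0_compat; apply lt_0_INR, Factorial.lt_O_fact.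
Qed.

Lemma C_S_S n j : (j <= n)%nat ->
  INR (S j) * Binomial.C (S n) (S j) = INR (S n) * Binomial.C n j.
Proof.
  intro Hj. unfold Binomial.C. replace (S n - S j)%nat with (n - j)%nat by lia.
  rewrite !fact_simpl, !mult_INR.
  field. repeat split; try apply INR_fact_neq_0. apply not_0_INR; lia.
Qed.

Lemma sum_pascal (t : nat -> R) n :
  sum_f_R0 (fun j => Binomial.C (S n) j * t j) (S n) =
  sum_f_R0 (fun j => Binomial.C n j * t j) n + sum_f_R0 (fun j => Binomial.C n j * t (S j)) n.
Proof.
  destruct n as [|n].
  - simpl. rewrite C_n_0, C_n_n. unfold Binomial.C; simpl. field.
  - rewrite (decomp_sum _ (S (S n))) by lia. simpl pred.
    rewrite (decomp_sum (fun j => Binomial.C (S n) j * t j) (S n)) by lia. simpl pred.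
    rewrite tech5. rewrite C_n_0, C_n_0.
    rewrite (tech5 (fun j => Binomial.C (S n) j * t (S j))).
    rewrite !C_n_n.
    rewrite (sum_eq (fun i => Binomial.C (S (S n)) (S i) * t (S i))
       (fun i => Binomial.C (S n) (S i) * t (S i) + Binomial.C (S n) i * t (S i))).
    + rewrite plus_sum. ring.
    + intros i Hi. rewrite <- pascal by lia. ring.
Qed.

Lemma Hs_rec n b c u : 0 < c ->
  Hs (S n) b c u = Hs n b c u + u * (b / c) * Hs n (b + 1) (c + 1) u.
Proof.
  intro Hc. unfold Hs.
  rewrite (sum_eq (fun j => Binomial.C (S n) j * rising b j / rising c j * u ^ j)
     (fun j => Binomial.C (S n) j * (rising b j / rising c j * u ^ j)))
    by (intros; unfold Rdiv; ring).
  rewrite sum_pascal. f_equal. all: try (apply sum_eq; intros; unfold Rdiv; ring).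
  - rewrite scal_sum. apply sum_eq; intros i _.
    rewrite !rising_S. simpl pow.
    assert (0 < rising (c+1) i) by (apply rising_pos; lra).
    field. split; lra.
Qed.

Lemma Hs_0 b c u : Hs 0 b c u = 1.
Proof. unfold Hs; simpl. rewrite C_n_0. field. Qed.

Lemma chu n : forall b c, 0 < c -> Hs n b c (-1) = rising (c - b) n / rising c n.
Proof.
  induction n as [|n IH]; intros b c Hc.
  - rewrite Hs_0. simpl. field.
  - rewrite Hs_rec by lra. rewrite IH by lra. rewrite IH by lra.
    replace (c + 1 - (b + 1)) with (c - b) by ring.
    change (rising (c - b) (S n)) with (rising (c - b) n * (c - b + INR n)).
    rewrite rising_S.
    change (rising c (S n)) with (rising c n * (c + INR n)).
    assert (Hr : rising c n * (c + INR n) = c * rising (c+1) n).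
    { change (rising c n * (c + INR n)) with (rising c (S n)). apply rising_S. }
    assert (0 < rising (c+1) n) by (apply rising_pos; lra).
    assert (0 < rising c n) by (apply rising_pos; lra).
    pose proof (pos_INR n).
    assert (E : rising c n = c * rising (c+1) n / (c + INR n)).
    { rewrite <- Hr. field. lra. }
    rewrite E. field. repeat split; lra.
Qed.

Lemma poly_deriv (a : nat -> R) n u :
  derivable_pt_lim (fun u => sum_f_R0 (fun j => a j * u ^ j) (S n)) u
    (sum_f_R0 (fun j => a (S j) * INR (S j) * u ^ j) n).
Proof.
  induction n as [|n IH].
  - change (derivable_pt_lim (fun u => a 0%nat * u^0 + a 1%nat * u^1) u (a 1%nat * INR 1 * u ^ 0)).
    replace (a 1%nat * INR 1 * u ^ 0) with (a 0%nat * (INR 0 * u ^ pred 0) + a 1%nat * (INR 1 * u ^ pred 1)) by (simpl; ring).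
    apply (derivable_pt_lim_plus (fun u => a 0%nat * u ^ 0) (fun u => a 1%nat * u ^ 1)).
    + apply (derivable_pt_lim_scal (fun u => u ^ 0)). apply derivable_pt_lim_pow.
    + apply (derivable_pt_lim_scal (fun u => u ^ 1)). apply derivable_pt_lim_pow.
  - change (sum_f_R0 (fun j => a (S j) * INR (S j) * u ^ j) (S n)) with
      (sum_f_R0 (fun j => a (S j) * INR (S j) * u ^ j) n + a (S (S n)) * INR (S (S n)) * u ^ (S n)).
    apply (derivable_pt_lim_plus (fun u => sum_f_R0 (fun j => a j * u ^ j) (S n))
             (fun u => a (S (S n)) * u ^ (S (S n)))); auto.
    replace (a (S (S n)) * INR (S (S n)) * u ^ S n) with
      (a (S (S n)) * (INR (S (S n)) * u ^ pred (S (S n)))) by (simpl; ring).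
    apply (derivable_pt_lim_scal (fun u => u ^ (S (S n)))). apply derivable_pt_lim_pow.
Qed.

Lemma Hs_deriv n b c u : 0 < c ->
  derivable_pt_lim (Hs (S n) b c) u (INR (S n) * b / c * Hs n (b + 1) (c + 1) u).
Proof.
  intro Hc. unfold Hs.
  pose proof (poly_deriv (fun j => Binomial.C (S n) j * rising b j / rising c j) n u) as H.
  replace (INR (S n) * b / c * sum_f_R0 (fun j => Binomial.C n j * rising (b + 1) j / rising (c + 1) j * u ^ j) n)
    with (sum_f_R0 (fun j => Binomial.C (S n) (S j) * rising b (S j) / rising c (S j) * INR (S j) * u ^ j) n).
  - exact H.
  - rewrite scal_sum. apply sum_eq. intros i Hi.
    rewrite !rising_S.
    assert (0 < rising (c+1) i) by (apply rising_pos; lra).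
    assert (E := C_S_S n i Hi).
    replace (Binomial.C (S n) (S i) * (b * rising (b + 1) i) / (c * rising (c + 1) i) * INR (S i) * u ^ i)
      with ((INR (S i) * Binomial.C (S n) (S i)) * (b * rising (b + 1) i) / (c * rising (c + 1) i) * u ^ i)
      by (field; split; lra).
    rewrite E. field. split; lra.
Qed.

Lemma sum_ge_first (f : nat -> R) N : (forall i, (i <= N)%nat -> 0 <= f i) -> f 0%nat <= sum_f_R0 f N.
Proof.
  induction N as [|N IH]; intro H; simpl. lra.
  assert (0 <= f (S N)) by (apply H; lia). assert (f 0%nat <= sum_f_R0 f N) by (apply IH; intros; apply H; lia). lra.
Qed.

Lemma Hs_pos_right n b c u : 0 < c -> (n = 0%nat \/ 0 < b) -> 0 <= u -> 0 < Hs n b c u.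
Proof.
  intros Hc [Hn|Hb] Hu.
  - subst. rewrite Hs_0. lra.
  - unfold Hs. eapply Rlt_le_trans; [|apply sum_ge_first].
    + rewrite C_n_0. simpl. lra.
    + intros i _. apply Rmult_le_pos; [|apply pow_le; auto].
      unfold Rdiv. apply Rmult_le_pos; [apply Rmult_le_pos|].
      * apply C_nn.
      * apply rising_nn; lra.
      * left; apply Rinv_0_lt_compat, rising_pos; auto.
Qed.

Lemma Hs_left n : forall c, 0 < c -> forall u, u <= -1 ->
  0 < (-1) ^ n * Hs n (INR n + 2 * c - 1) c u.
Proof.
  induction n as [|n IH]; intros c Hc u Hu.
  - rewrite Hs_0. simpl. lra.
  - set (B := INR (S n) + 2 * c - 1).
    assert (HB : 0 < B) by (unfold B; rewrite S_INR; pose proof (pos_INR n); lra).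
    set (g := fun v => (-1) ^ S n * Hs (S n) B c v).
    set (g' := fun v => (-1) ^ S n * (INR (S n) * B / c * Hs n (B + 1) (c + 1) v)).
    assert (Hg1 : 0 < g (-1)).
    { unfold g. rewrite chu by lra.
      replace (c - B) with (- c - INR n) by (unfold B; rewrite S_INR; ring).
      assert (H1 := rising_neg n (- c - INR n) ltac:(lra)).
      assert (0 < rising c (S n)) by (apply rising_pos; lra).
      replace ((-1) ^ S n * (rising (- c - INR n) (S n) / rising c (S n))) with
        (((-1) ^ S n * rising (- c - INR n) (S n)) / rising c (S n)) by (field; lra).
      apply Rdiv_lt_0_compat; auto. }
    assert (Hg' : forall v, v <= -1 -> g' v < 0).
    { intros v Hv. unfold g'.
      replace (B + 1) with (INR n + 2 * (c + 1) - 1) by (unfold B; rewrite S_INR; ring).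
      assert (H1 := IH (c + 1) ltac:(lra) v Hv).
      assert (0 < INR (S n) * B / c).
      { apply Rdiv_lt_0_compat; auto. apply Rmult_lt_0_compat; auto. apply lt_0_INR; lia. }
      replace ((-1) ^ S n * (INR (S n) * B / c * Hs n (INR n + 2 * (c + 1) - 1) (c + 1) v))
        with (- (INR (S n) * B / c) * ((-1) ^ n * Hs n (INR n + 2 * (c + 1) - 1) (c + 1) v))
        by (simpl; ring).
      assert (0 < (INR (S n) * B / c) * ((-1) ^ n * Hs n (INR n + 2 * (c + 1) - 1) (c + 1) v))
        by (apply Rmult_lt_0_compat; auto).
      lra. }
    destruct (Req_dec u (-1)) as [->|Hne]; [exact Hg1|].
    destruct (MVT_cor2 g g' u (-1)) as [xi [Hxi1 Hxi2]].
    + lra.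
    + intros v _. unfold g, g'. apply (derivable_pt_lim_scal (Hs (S n) B c)).
      apply Hs_deriv. lra.
    + assert (g' xi < 0) by (apply Hg'; lra).
      assert (g' xi * (-1 - u) < 0).
      { assert (0 < (- g' xi) * (-1 - u)) by (apply Rmult_lt_0_compat; lra). lra. }
      change (0 < g u). lra.
Qed.

Lemma Gegen_zero_inside n al x : -1/2 < al -> Gegen n al x = 0 -> -1 < x < 1.
Proof.
  intros Hal H0. rewrite Gegen_Hs in H0.
  set (c := al + / 2) in *.
  assert (Hc : 0 < c) by (unfold c; lra).
  replace (2 * al + INR n) with (INR n + 2 * c - 1) in H0 by (unfold c; field).
  destruct (Rlt_or_le x 1) as [Hx1|Hx1].
  - destruct (Rlt_or_le (-1) x) as [Hx2|Hx2]; [lra|].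
    assert (H := Hs_left n c Hc ((x - 1) / 2) ltac:(lra)).
    rewrite H0, Rmult_0_r in H. lra.
  - assert (H := Hs_pos_right n (INR n + 2 * c - 1) c ((x - 1) / 2) Hc).
    destruct n as [|n]; [|rewrite S_INR in H; pose proof (pos_INR n)].
    + assert (0 < Hs 0 (INR 0 + 2 * c - 1) c ((x - 1) / 2)) by (apply H; auto; lra). lra.
    + assert (0 < Hs (S n) (INR n + 1 + 2 * c - 1) c ((x - 1) / 2)) by (apply H; [right|]; lra).
      rewrite S_INR in H0. lra.
Qed.


Definition chain (D : nat -> R -> R) := forall n x, derivable_pt_lim (D n) x (D (S n) x).

Definition polyc (d : nat) (g : R -> R) :=
  exists D, chain D /\ (forall x, D 0%nat x = g x) /\ (forall k x, (d < k)%nat -> D k x = 0).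

Definition polycm (d : nat) (g : R -> R) (lc : R) :=
  exists D, chain D /\ (forall x, D 0%nat x = g x) /\ (forall x, D d x = lc) /\
    (forall k x, (d < k)%nat -> D k x = 0).

Lemma lin_deriv a b x : derivable_pt_lim (fun x => a * x + b) x a.
Proof.
  assert (H : derivable_pt_lim (fun x => a * x + b) x (a * 1 + 0)).
  { apply (derivable_pt_lim_plus (fun x => a * x) (fun _ => b)).
    - apply (derivable_pt_lim_scal id). apply derivable_pt_lim_id.
    - apply (derivable_pt_lim_const b). }
  replace (a * 1 + 0) with a in H by ring. exact H.
Qed.

Lemma chain_const c : chain (fun n x => match n with O => c | S _ => 0 end).
Proof.
  intros [|n] x; simpl.
  - apply (derivable_pt_lim_const c).
  - apply (derivable_pt_lim_const 0).
Qed.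

Lemma chain_mul_lin Q a b : chain Q ->
  chain (fun n x => Q n x * (a * x + b) + INR n * a * Q (pred n) x).
Proof.
  intros HQ n x.
  assert (H1 : derivable_pt_lim (fun x => Q n x * (a * x + b)) x
                (Q (S n) x * (a * x + b) + Q n x * a)).
  { apply (derivable_pt_lim_mult (Q n) (fun x => a * x + b)); auto. apply lin_deriv. }
  assert (H2 : derivable_pt_lim (fun x => INR n * a * Q (pred n) x) x
                (INR n * a * Q (S (pred n)) x)).
  { apply (derivable_pt_lim_scal (Q (pred n))). auto. }
  replace (Q (S n) x * (a * x + b) + INR (S n) * a * Q (pred (S n)) x) with
    ((Q (S n) x * (a * x + b) + Q n x * a) + INR n * a * Q (S (pred n)) x).
  - apply (derivable_pt_lim_plus (fun x => Q n x * (a * x + b)) (fun x => INR n * a * Q (pred n) x)); auto.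
  - destruct n as [|n]; simpl pred; rewrite ?S_INR; simpl INR; ring.
Qed.

Lemma polyc_ext d g h : (forall x, g x = h x) -> polyc d g -> polyc d h.
Proof.
  intros E [D [H1 [H2 H3]]]. exists D. repeat split; auto. intro x; rewrite H2; auto.
Qed.

Lemma polyc_mono d d' g : (d <= d')%nat -> polyc d g -> polyc d' g.
Proof.
  intros Hd [D [H1 [H2 H3]]]. exists D. repeat split; auto. intros k x Hk; apply H3; lia.
Qed.

Lemma polyc_const c : polyc 0 (fun _ => c).
Proof.
  exists (fun n x => match n with O => c | S _ => 0 end). repeat split.
  - apply chain_const.
  - intros [|k] x Hk; [lia|reflexivity].
Qed.

Lemma polyc_mul_lin d q a b : polyc d q -> polyc (S d) (fun x => q x * (a * x + b)).
Proof.
  intros [Q [H1 [H2 H3]]].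
  exists (fun n x => Q n x * (a * x + b) + INR n * a * Q (pred n) x). repeat split.
  - apply chain_mul_lin; auto.
  - intro x. simpl. rewrite H2. ring.
  - intros k x Hk. rewrite !H3 by lia. ring.
Qed.

Lemma polycm_const c : polycm 0 (fun _ => c) c.
Proof.
  exists (fun n x => match n with O => c | S _ => 0 end). repeat split.
  - apply chain_const.
  - intros [|k] x Hk; [lia|reflexivity].
Qed.

Lemma polycm_mul_lin d q lc a b : polycm d q lc ->
  polycm (S d) (fun x => q x * (a * x + b)) (INR (S d) * a * lc).
Proof.
  intros [Q [H1 [H2 [H4 H3]]]].
  exists (fun n x => Q n x * (a * x + b) + INR n * a * Q (pred n) x). repeat split.
  - apply chain_mul_lin; auto.
  - intro x. simpl. rewrite H2. ring.
  - intro x. simpl pred. rewrite H4, H3 by lia. ring.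
  - intros k x Hk. rewrite !H3 by lia. ring.
Qed.

Lemma polycm_polyc d g lc : polycm d g lc -> polyc d g.
Proof. intros [D [H1 [H2 [H4 H3]]]]. exists D; auto. Qed.

Lemma polyc_plus d g h : polyc d g -> polyc d h -> polyc d (fun x => g x + h x).
Proof.
  intros [D [H1 [H2 H3]]] [E [G1 [G2 G3]]].
  exists (fun n x => D n x + E n x). repeat split.
  - intros n x. apply (derivable_pt_lim_plus (D n) (E n)); auto.
  - intro x. rewrite H2, G2. auto.
  - intros k x Hk. rewrite H3, G3 by lia. ring.
Qed.

Lemma polyc_scal d g s : polyc d g -> polyc d (fun x => s * g x).
Proof.
  intros [D [H1 [H2 H3]]].
  exists (fun n x => s * D n x). repeat split.
  - intros n x. apply (derivable_pt_lim_scal (D n)); auto.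
  - intro x. rewrite H2. auto.
  - intros k x Hk. rewrite H3 by lia. ring.
Qed.

Lemma polyc_sum d (F : nat -> R -> R) n :
  (forall i, (i <= n)%nat -> polyc d (F i)) -> polyc d (fun x => sum_f_R0 (fun i => F i x) n).
Proof.
  induction n as [|n IH]; intro H.
  - simpl. apply H. lia.
  - simpl. apply (polyc_plus d (fun x => sum_f_R0 (fun i => F i x) n) (F (S n))).
    + apply IH; intros; apply H; lia.
    + apply H; lia.
Qed.

Definition lfac (z : nat -> R) (i j : nat) (x : R) : R :=
  if Nat.eq_dec j i then 1 else (x - z j) / (z i - z j).

Lemma lfac_poly z i j q d : polyc d q ->
  polyc (if Nat.eq_dec j i then d else S d) (fun x => q x * lfac z i j x).
Proof.
  intro Hq. unfold lfac. destruct (Nat.eq_dec j i).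
  - apply (polyc_ext _ q); auto. intro; ring.
  - apply (polyc_ext _ (fun x => q x * (/ (z i - z j) * x + (- z j / (z i - z j))))).
    + intro x. unfold Rdiv. ring.
    + apply polyc_mul_lin; auto.
Qed.

Lemma lagrange_poly_gen z i n : polyc (S n) (lagrange z n i).
Proof.
  induction n as [|n IH].
  - apply (polyc_ext _ (fun x => 1 * lfac z i 0 x)).
    + intro x. unfold lagrange, lfac; simpl. destruct (Nat.eq_dec 0 i); ring.
    + apply (polyc_mono (if Nat.eq_dec 0 i then 0 else 1)).
      * destruct (Nat.eq_dec 0 i); lia.
      * apply lfac_poly, polyc_const.
  - apply (polyc_ext _ (fun x => lagrange z n i x * lfac z i (S n) x)).
    + intro x. reflexivity.
    + eapply polyc_mono; [|apply lfac_poly, IH]. destruct (Nat.eq_dec (S n) i); lia.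
Qed.

Lemma lagrange_poly z i n : (i <= n)%nat -> polyc n (lagrange z n i).
Proof.
  induction n as [|n IH]; intro Hi.
  - assert (i = 0%nat) by lia. subst.
    apply (polyc_ext _ (fun x => 1 * lfac z 0 0 x)).
    + intro x. unfold lagrange, lfac; simpl. ring.
    + apply (lfac_poly z 0 0 (fun _ => 1) 0), polyc_const.
  - apply (polyc_ext _ (fun x => lagrange z n i x * lfac z i (S n) x)).
    + intro x. reflexivity.
    + destruct (Nat.eq_dec (S n) i) as [e|e].
      * subst. pose proof (lfac_poly z (S n) (S n) _ _ (lagrange_poly_gen z (S n) n)).
        destruct (Nat.eq_dec (S n) (S n)); [auto|congruence].
      * pose proof (lfac_poly z i (S n) _ _ (IH ltac:(lia))).
        destruct (Nat.eq_dec (S n) i); [congruence|auto].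
Qed.

Definition omega (z : nat -> R) (n : nat) (x : R) : R := prod_f_R0 (fun j => x - z j) n.

Lemma polycm_ext d g h lc lc' : (forall x, g x = h x) -> lc = lc' -> polycm d g lc -> polycm d h lc'.
Proof.
  intros E El [D [H1 [H2 [H4 H3]]]]. subst. exists D. repeat split; auto.
  intro x; rewrite H2; auto.
Qed.

Lemma omega_poly z n : polycm (S n) (omega z n) (INR (Factorial.fact (S n))).
Proof.
  induction n as [|n IH].
  - eapply polycm_ext; [| |apply (polycm_mul_lin 0 (fun _ => 1) 1 1 (- z 0%nat) (polycm_const 1))].
    + intro x. unfold omega. simpl. ring.
    + simpl. ring.
  - eapply polycm_ext; [| |apply (polycm_mul_lin _ _ _ 1 (- z (S n)) IH)].
    + intro x. unfold omega. simpl. ring.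
    + rewrite (fact_simpl (S n)), mult_INR. ring.
Qed.


Lemma rolle_step (g g' : R -> R) :
  (forall t, -1 < t < 1 -> derivable_pt_lim g t (g' t)) ->
  forall l a, StronglySorted Rlt (a :: l) ->
  (forall y, In y (a :: l) -> -1 < y < 1 /\ g y = 0) ->
  exists l', length l' = length l /\ StronglySorted Rlt l' /\
    (forall y, In y l' -> a < y /\ -1 < y < 1 /\ g' y = 0).
Proof.
  intros Hd l. induction l as [|b l IH]; intros a Hs Hz.
  - exists []. split; [reflexivity|]. split; [constructor|]. intros y0 H0; destruct H0.
  - apply StronglySorted_inv in Hs as [Hs1 Hs2].
    assert (Hab : a < b) by (inversion Hs2; auto).
    destruct (IH b Hs1) as [l'' [L1 [L2 L3]]].
    { intros y Hy. apply Hz. right; auto. }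
    destruct (Hz a (or_introl eq_refl)) as [Ha1 Ha2].
    destruct (Hz b (or_intror (or_introl eq_refl))) as [Hb1 Hb2].
    destruct (MVT_cor2 g g' a b Hab) as [w [Hw1 Hw2]].
    { intros t Ht. apply Hd. lra. }
    assert (Hw : g' w = 0).
    { rewrite Ha2, Hb2 in Hw1. assert (b - a <> 0) by lra.
      assert (E : g' w * (b - a) = 0) by lra.
      destruct (Rmult_integral _ _ E) ; [auto|lra]. }
    exists (w :: l''). split; [simpl; auto|]. split.
    + constructor; auto. apply Forall_forall. intros y Hy. destruct (L3 y Hy); lra.
    + intros y [<-|Hy].
      * repeat split; auto; lra.
      * destruct (L3 y Hy) as [? [? ?]]. repeat split; auto; lra.
Qed.

Lemma gen_rolle k : forall D : nat -> R -> R,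
  (forall j t, -1 < t < 1 -> derivable_pt_lim (D j) t (D (S j) t)) ->
  forall l, length l = S k -> StronglySorted Rlt l ->
  (forall y, In y l -> -1 < y < 1 /\ D 0%nat y = 0) ->
  exists xi, -1 < xi < 1 /\ D k xi = 0.
Proof.
  induction k as [|k IH]; intros D Hd l Hl Hs Hz.
  - destruct l as [|y l]; [discriminate|]. exists y. apply Hz. left; auto.
  - destruct l as [|a l]; [discriminate|].
    destruct (rolle_step (D 0%nat) (D 1%nat) (Hd 0%nat) l a Hs Hz) as [l' [L1 [L2 L3]]].
    destruct (IH (fun j => D (S j)) (fun j => Hd (S j)) l') as [xi Hxi]; auto.
    + simpl in Hl. lia.
    + intros y Hy. destruct (L3 y Hy) as [_ [? ?]]; auto.
    + exists xi; auto.
Qed.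

Lemma insert_sorted (a : R) : forall l, StronglySorted Rlt l -> ~ In a l ->
  exists l', Permutation (a :: l) l' /\ StronglySorted Rlt l'.
Proof.
  induction l as [|b l IH]; intros Hs Hn.
  - exists [a]. split; auto. constructor; auto.
  - apply StronglySorted_inv in Hs as [Hs1 Hs2].
    destruct (Rlt_or_le a b) as [Hab|Hab].
    + exists (a :: b :: l). split; auto. constructor.
      * constructor; auto.
      * constructor; auto. apply Forall_forall. intros y Hy.
        rewrite Forall_forall in Hs2. specialize (Hs2 y Hy). lra.
    + assert (a <> b) by (intro; apply Hn; left; auto).
      destruct (IH Hs1) as [l3 [P1 P2]]. { intro; apply Hn; right; auto. }
      exists (b :: l3). split.
      * eapply perm_trans; [apply perm_swap|]. apply perm_skip; auto.
      * constructor; auto. apply Forall_forall. intros y Hy.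
        apply (Permutation_in _ (Permutation_sym P1)) in Hy.
        destruct Hy as [<-|Hy]; [lra|]. rewrite Forall_forall in Hs2. auto.
Qed.

Lemma sort_exists : forall l : list R, NoDup l ->
  exists l', Permutation l l' /\ StronglySorted Rlt l'.
Proof.
  induction l as [|a l IH]; intro Hn.
  - exists []. split; auto. constructor.
  - apply NoDup_cons_iff in Hn as [Hn1 Hn2].
    destruct (IH Hn2) as [l' [P1 P2]].
    destruct (insert_sorted a l' P2) as [l'' [Q1 Q2]].
    { intro H; apply Hn1. apply (Permutation_in _ (Permutation_sym P1)); auto. }
    exists l''. split; auto. eapply perm_trans; [apply perm_skip, P1|]; auto.
Qed.

Lemma nodup_map_seq (z : nat -> R) s n :
  (forall i j, (s <= i < s + n)%nat -> (s <= j < s + n)%nat -> i <> j -> z i <> z j) ->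
  NoDup (map z (seq s n)).
Proof.
  revert s; induction n as [|n IH]; intros s H; simpl.
  - constructor.
  - constructor.
    + intro Hin. apply in_map_iff in Hin as [j [Hj1 Hj2]]. apply in_seq in Hj2.
      apply (H j s); auto; lia.
    + apply IH. intros i j Hi Hj Hij. apply H; auto; lia.
Qed.


Lemma deriv_interior g dg x : deriv_on g dg -> -1 < x < 1 -> derivable_pt_lim g x (dg x).
Proof.
  intros Hd Hx eps Heps.
  destruct (Hd x ltac:(lra) eps Heps) as [alp [Halp H]].
  assert (Hpos : 0 < Rmin alp (Rmin (1 - x) (x + 1))).
  { repeat apply Rmin_pos; lra. }
  exists (mkposreal _ Hpos). intros h Hh0 Hh. simpl in Hh.
  assert (Hh1 : Rabs h < alp) by (eapply Rlt_le_trans; [exact Hh|apply Rmin_l]).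
  assert (Hh2 : Rabs h < Rmin (1 - x) (x + 1)) by (eapply Rlt_le_trans; [exact Hh|apply Rmin_r]).
  assert (Hh3 : Rabs h < 1 - x) by (eapply Rlt_le_trans; [exact Hh2|apply Rmin_l]).
  assert (Hh4 : Rabs h < x + 1) by (eapply Rlt_le_trans; [exact Hh2|apply Rmin_r]).
  apply Rabs_def2 in Hh3. apply Rabs_def2 in Hh4.
  specialize (H (x + h)).
  simpl in H. unfold R_dist in H.
  replace (x + h - x) with h in H by ring.
  apply H. split; [split; [lra|] |auto].
  intro E. apply Hh0. lra.
Qed.

Lemma prod_zero (F : nat -> R) n i : (i <= n)%nat -> F i = 0 -> prod_f_R0 F n = 0.
Proof.
  induction n as [|n IH]; intros Hi Hz.
  - assert (i = 0%nat) by lia. subst. simpl. auto.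
  - simpl. destruct (Nat.eq_dec i (S n)) as [->|Hne].
    + rewrite Hz. ring.
    + rewrite IH by (auto; lia). ring.
Qed.

Lemma prod_one (F : nat -> R) n : (forall i, (i <= n)%nat -> F i = 1) -> prod_f_R0 F n = 1.
Proof.
  induction n as [|n IH]; intros H; simpl.
  - apply H; lia.
  - rewrite IH, H by (auto; lia). ring.
Qed.

Lemma prod_nonzero (F : nat -> R) n : (forall i, (i <= n)%nat -> F i <> 0) -> prod_f_R0 F n <> 0.
Proof.
  induction n as [|n IH]; intros H; simpl.
  - apply H; lia.
  - apply Rmult_integral_contrapositive_currified; [apply IH; intros; apply H; lia|apply H; lia].
Qed.

Lemma prod_abs_le (F : nat -> R) n : (forall i, (i <= n)%nat -> Rabs (F i) <= 2) ->
  Rabs (prod_f_R0 F n) <= 2 ^ S n.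
Proof.
  induction n as [|n IH]; intros H.
  - simpl. rewrite Rmult_1_r. apply H; lia.
  - change (prod_f_R0 F (S n)) with (prod_f_R0 F n * F (S n)).
    rewrite Rabs_mult. change (2 ^ S (S n)) with (2 * 2 ^ S n).
    rewrite Rmult_comm.
    apply Rmult_le_compat; try apply Rabs_pos; [apply H; lia| apply IH; intros; apply H; lia].
Qed.

Lemma sum_zero (F : nat -> R) n : (forall i, (i <= n)%nat -> F i = 0) -> sum_f_R0 F n = 0.
Proof.
  induction n as [|n IH]; intros H; simpl.
  - apply H; lia.
  - rewrite IH, H by (auto; lia). ring.
Qed.

Lemma sum_delta (F : nat -> R) n i : (i <= n)%nat -> (forall j, (j <= n)%nat -> j <> i -> F j = 0) ->
  sum_f_R0 F n = F i.
Proof.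
  induction n as [|n IH]; intros Hi H.
  - assert (i = 0%nat) by lia. subst. reflexivity.
  - simpl. destruct (Nat.eq_dec i (S n)) as [->|Hne].
    + rewrite sum_zero; [ring|]. intros j Hj. apply H; lia.
    + rewrite IH by (auto; lia). rewrite (H (S n)) by lia. ring.
Qed.

Lemma lagrange_node z m i j : (i <= m)%nat -> (j <= m)%nat ->
  (forall p q, (p <= m)%nat -> (q <= m)%nat -> p <> q -> z p <> z q) ->
  lagrange z m j (z i) = if Nat.eq_dec i j then 1 else 0.
Proof.
  intros Hi Hj Hz. unfold lagrange. destruct (Nat.eq_dec i j) as [->|Hne].
  - apply prod_one. intros k Hk. destruct (Nat.eq_dec k j) as [|Hkj]; auto.
    field. intro E. apply (Hz j k); auto. lra.
  - apply (prod_zero _ m i); auto. destruct (Nat.eq_dec i j); [congruence|].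
    unfold Rdiv. ring.
Qed.

Definition Pint (z : nat -> R) (f : R -> R) m (x : R) : R :=
  sum_f_R0 (fun i => lagrange z m i x * f (z i)) m.

Lemma Pint_node z f m i : (i <= m)%nat ->
  (forall p q, (p <= m)%nat -> (q <= m)%nat -> p <> q -> z p <> z q) ->
  Pint z f m (z i) = f (z i).
Proof.
  intros Hi Hz. unfold Pint. rewrite (sum_delta _ m i Hi).
  - rewrite lagrange_node; auto. destruct (Nat.eq_dec i i); [ring|congruence].
  - intros j Hj Hji. rewrite lagrange_node; auto. destruct (Nat.eq_dec i j); [congruence|ring].
Qed.

Lemma Pint_poly z f m : polyc m (Pint z f m).
Proof.
  unfold Pint. apply (polyc_sum m (fun i x => lagrange z m i x * f (z i))).
  intros i Hi. apply (polyc_ext _ (fun x => f (z i) * lagrange z m i x)).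
  - intro; ring.
  - apply polyc_scal. apply lagrange_poly; auto.
Qed.

Lemma interp_err (f : R -> R) (df : nat -> R -> R) (A : R) (z : nat -> R) m x :
  (forall x, -1 <= x <= 1 -> df 0%nat x = f x) ->
  (forall n, deriv_on (df n) (df (S n))) ->
  (forall n x, -1 <= x <= 1 -> Rabs (df (S n) x) <= A) ->
  (forall i, (i <= m)%nat -> -1 < z i < 1) ->
  (forall p q, (p <= m)%nat -> (q <= m)%nat -> p <> q -> z p <> z q) ->
  -1 < x < 1 ->
  Rabs (f x - Pint z f m x) <= A * 2 ^ S m / INR (Factorial.fact (S m)).
Proof.
  intros Hf0 Hdf HA Hzin Hzd Hx.
  assert (HA0 : 0 <= A) by (eapply Rle_trans; [apply Rabs_pos|apply (HA 0%nat x); lra]).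
  assert (Hfact : 0 < INR (Factorial.fact (S m))) by (apply lt_0_INR, Factorial.lt_O_fact).
  assert (Hbound : 0 <= A * 2 ^ S m / INR (Factorial.fact (S m))).
  { apply Rmult_le_pos; [apply Rmult_le_pos; [auto|apply pow_le; lra]|].
    left; apply Rinv_0_lt_compat; auto. }
  destruct (Classical_Prop.classic (exists i, (i <= m)%nat /\ x = z i)) as [[i [Hi ->]]|Hnn].
  - rewrite Pint_node by auto. unfold Rminus. rewrite Rplus_opp_r, Rabs_R0. auto.
  - set (w := omega z m x).
    assert (Hw : w <> 0).
    { unfold w, omega. apply prod_nonzero. intros j Hj E. apply Hnn. exists j. split; auto. lra. }
    assert (Hwb : Rabs w <= 2 ^ S m).
    { unfold w, omega. apply prod_abs_le. intros j Hj. specialize (Hzin j Hj).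
      apply Rabs_le. lra. }
    set (K := (f x - Pint z f m x) / w).
    destruct (Pint_poly z f m) as [DP [HP1 [HP2 HP3]]].
    destruct (omega_poly z m) as [DW [HW1 [HW2 [HW3 HW4]]]].
    set (DE := fun k t => df k t - DP k t - K * DW k t).
    assert (Hd : forall j t, -1 < t < 1 -> derivable_pt_lim (DE j) t (DE (S j) t)).
    { intros j t Ht. unfold DE.
      apply (derivable_pt_lim_minus (fun t => df j t - DP j t) (fun t => K * DW j t)).
      - apply (derivable_pt_lim_minus (df j) (DP j)).
        + apply deriv_interior; auto.
        + apply HP1.
      - apply (derivable_pt_lim_scal (DW j)). apply HW1. }
    set (l0 := x :: map z (seq 0 (S m))).
    assert (Hnd : NoDup l0).
    { constructor.
      - intro Hin. apply in_map_iff in Hin as [j [Hj1 Hj2]]. apply in_seq in Hj2.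
        apply Hnn. exists j. split; [lia|auto].
      - apply nodup_map_seq. intros p q Hp Hq Hpq. apply Hzd; auto; lia. }
    destruct (sort_exists l0 Hnd) as [l' [Pl Sl]].
    destruct (gen_rolle (S m) DE Hd l') as [xi [Hxi1 Hxi2]]; auto.
    + rewrite <- (Permutation_length Pl). unfold l0. simpl. rewrite length_map, length_seq. auto.
    + intros y Hy. apply (Permutation_in _ (Permutation_sym Pl)) in Hy.
      destruct Hy as [<-|Hy].
      * split; auto. unfold DE. rewrite Hf0, HP2, HW2 by lra. fold w. unfold K. field. auto.
      * apply in_map_iff in Hy as [j [<- Hj]]. apply in_seq in Hj.
        assert (Hj' : (j <= m)%nat) by lia.
        split; auto. unfold DE. rewrite Hf0, HP2, HW2 by (specialize (Hzin j Hj'); lra).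
        rewrite Pint_node by auto. unfold omega. rewrite (prod_zero _ m j) by (auto; ring). ring.
    + unfold DE in Hxi2. rewrite HP3, HW3 in Hxi2 by lia.
      assert (EK : K = df (S m) xi / INR (Factorial.fact (S m))).
      { field_simplify_eq; [lra|lra]. }
      replace (f x - Pint z f m x) with (K * w) by (unfold K; field; auto).
      rewrite EK, Rabs_mult. unfold Rdiv. rewrite Rabs_mult.
      rewrite (Rabs_right (/ _)) by (left; apply Rinv_0_lt_compat; auto).
      replace (A * 2 ^ S m * / INR (Factorial.fact (S m))) with
        (A * / INR (Factorial.fact (S m)) * 2 ^ S m) by ring.
      apply Rmult_le_compat; try apply Rabs_pos; auto.
      * apply Rmult_le_pos; [apply Rabs_pos|left; apply Rinv_0_lt_compat; auto].
      * apply Rmult_le_compat_r; [left; apply Rinv_0_lt_compat; auto|]. apply HA. lra.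
Qed.

From Coquelicot Require Import Coquelicot.
Open Scope R_scope.

Lemma Rint_RInt g a b : ex_RInt g a b -> Rint g a b = RInt g a b.
Proof.
  intro H. pose proof (ex_RInt_Reals_0 _ _ _ H) as pr.
  unfold Rint.
  destruct (epsilon_spec (inhabits 0)
     (fun I => exists pr : Riemann_integrable g a b, RiemannInt pr = I)) as [pr' Hpr'].
  { exists (RiemannInt pr). exists pr. auto. }
  rewrite <- Hpr'. symmetry. apply RInt_Reals.
Qed.

Lemma polyc_exRInt d g a b : polyc d g -> ex_RInt g a b.
Proof.
  intros [D [H1 [H2 H3]]]. apply (@ex_RInt_continuous R_CompleteNormedModule). intros t _.
  apply (continuous_ext (D 0%nat)); auto.
  apply continuity_pt_filterlim. apply derivable_continuous_pt.
  exists (D 1%nat t). apply H1.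
Qed.

Lemma ex_RInt_mulc (F : R -> R) c a b : ex_RInt F a b -> ex_RInt (fun x => F x * c) a b.
Proof.
  intro H. apply (@ex_RInt_ext R_NormedModule (fun x => scal c (F x))).
  - intros x _. rewrite Rmult_comm. reflexivity.
  - apply (@ex_RInt_scal R_NormedModule); auto.
Qed.

Lemma RInt_mulc (F : R -> R) c a b : ex_RInt F a b -> RInt (fun x => F x * c) a b = RInt F a b * c.
Proof.
  intro H. rewrite (@RInt_ext R_CompleteNormedModule _ (fun x => scal c (F x))).
  - rewrite (@RInt_scal R_CompleteNormedModule F); auto. rewrite Rmult_comm. reflexivity.
  - intros x _. rewrite Rmult_comm. reflexivity.
Qed.

Lemma RInt_sum (F : nat -> R -> R) (w : nat -> R) n a b :
  (forall i, ex_RInt (F i) a b) ->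
  sum_f_R0 (fun i => RInt (F i) a b * w i) n = RInt (fun x => sum_f_R0 (fun i => F i x * w i) n) a b.
Proof.
  intro HF.
  assert (Hex : forall n, ex_RInt (fun x => sum_f_R0 (fun i => F i x * w i) n) a b).
  { induction n0 as [|n0 IH].
    - apply ex_RInt_mulc; auto.
    - apply (@ex_RInt_plus R_NormedModule (fun x => sum_f_R0 (fun i => F i x * w i) n0) (fun x => F (S n0) x * w (S n0))); auto.
      apply ex_RInt_mulc; auto. }
  induction n as [|n IH].
  - symmetry. apply RInt_mulc; auto.
  - change (sum_f_R0 (fun i => RInt (F i) a b * w i) (S n)) with
      (sum_f_R0 (fun i => RInt (F i) a b * w i) n + RInt (F (S n)) a b * w (S n)).
    change (fun x => sum_f_R0 (fun i => F i x * w i) (S n)) with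
      (fun x => plus (sum_f_R0 (fun i => F i x * w i) n) (F (S n) x * w (S n))).
    rewrite (@RInt_plus R_CompleteNormedModule (fun x => sum_f_R0 (fun i => F i x * w i) n) (fun x => F (S n) x * w (S n))); auto.
    + rewrite <- IH. rewrite RInt_mulc; auto.
    + apply ex_RInt_mulc; auto.
Qed.

Lemma quad_eq z f m xk :
  sum_f_R0 (fun i => qweight z m i xk * f (z i)) m = RInt (Pint z f m) (-1) xk.
Proof.
  unfold qweight. rewrite (sum_eq _ (fun i => RInt (lagrange z m i) (-1) xk * f (z i))).
  - unfold Pint. apply RInt_sum. intro i. apply (polyc_exRInt (S m)). apply lagrange_poly_gen.
  - intros i Hi. rewrite Rint_RInt; auto. apply (polyc_exRInt (S m)). apply lagrange_poly_gen.
Qed.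

Lemma RInt_abs_bound h a b B : a <= b -> ex_RInt h a b ->
  (forall t, a < t < b -> Rabs (h t) <= B) -> Rabs (RInt h a b) <= (b - a) * B.
Proof.
  intros Hab Hex Hb.
  assert (H1 : RInt h a b <= RInt (fun _ => B) a b).
  { apply RInt_le; auto. apply (@ex_RInt_const R_NormedModule). intros t Ht. specialize (Hb t Ht). apply Rabs_le_between in Hb. lra. }
  assert (H2 : RInt (fun _ => - B) a b <= RInt h a b).
  { apply RInt_le; auto. apply (@ex_RInt_const R_NormedModule). intros t Ht. specialize (Hb t Ht). apply Rabs_le_between in Hb. lra. }
  rewrite (@RInt_const R_CompleteNormedModule) in H1, H2. unfold scal in H1, H2; simpl in H1, H2; unfold mult in H1, H2; simpl in H1, H2.
  apply Rabs_le. lra.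
Qed.


Lemma nodes_ok m al z : -1/2 < al -> zeros_of (S m) al z ->
  (forall i, (i <= m)%nat -> -1 < z i < 1) /\
  (forall p q, (p <= m)%nat -> (q <= m)%nat -> p <> q -> z p <> z q).
Proof.
  intros Hal [Hd Hz]. split.
  - intros i Hi. apply (Gegen_zero_inside (S m) al); auto. apply Hz. lia.
  - intros p q Hp Hq Hpq. apply Hd; auto; lia.
Qed.

Lemma step_bound (f : R -> R) (A : R) (df : nat -> R -> R) (xk : R) m z c :
  (forall x, -1 <= x <= 1 -> df 0%nat x = f x) ->
  (forall n, deriv_on (df n) (df (S n))) ->
  (forall n x, -1 <= x <= 1 -> Rabs (df (S n) x) <= A) ->
  -1 <= xk <= 1 ->
  (forall i, (i <= m)%nat -> -1 < z i < 1) ->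
  (forall p q, (p <= m)%nat -> (q <= m)%nat -> p <> q -> z p <> z q) ->
  (forall i, (i <= m)%nat -> -1 < c i < 1) ->
  (forall p q, (p <= m)%nat -> (q <= m)%nat -> p <> q -> c p <> c q) ->
  Rabs (sum_f_R0 (fun i => qweight z m i xk * f (z i)) m
        - sum_f_R0 (fun i => qweight c m i xk * f (c i)) m)
  <= (xk + 1) * (2 * (A * 2 ^ S m / INR (Factorial.fact (S m)))).
Proof.
  intros Hf0 Hdf HA Hxk Hz1 Hz2 Hc1 Hc2.
  rewrite !quad_eq.
  assert (Ez := polyc_exRInt _ _ (-1) xk (Pint_poly z f m)).
  assert (Ec := polyc_exRInt _ _ (-1) xk (Pint_poly c f m)).
  assert (E : RInt (Pint z f m) (-1) xk - RInt (Pint c f m) (-1) xk =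
              RInt (fun t => Pint z f m t - Pint c f m t) (-1) xk).
  { symmetry. apply (@RInt_minus R_CompleteNormedModule); auto. }
  rewrite E. replace (xk + 1) with (xk - -1) by ring.
  apply RInt_abs_bound; [lra| |].
  - apply (@ex_RInt_minus R_NormedModule); auto.
  - intros t Ht.
    replace (Pint z f m t - Pint c f m t) with ((f t - Pint c f m t) - (f t - Pint z f m t)) by ring.
    eapply Rle_trans; [apply Rabs_triang|]. rewrite Rabs_Ropp.
    assert (H1 := interp_err f df A z m t Hf0 Hdf HA Hz1 Hz2 ltac:(lra)).
    assert (H2 := interp_err f df A c m t Hf0 Hdf HA Hc1 Hc2 ltac:(lra)).
    lra.
Qed.

Theorem theorem8 (f : R -> R) (A : R) (df : nat -> R -> R) (xk : R)
    (astar : nat -> R) (z c : nat -> nat -> R) :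
  0 < A ->
  (forall x, -1 <= x <= 1 -> df 0%nat x = f x) ->
  (forall n, deriv_on (df n) (df (S n))) ->
  (forall n x, -1 <= x <= 1 -> Rabs (df (S n) x) <= A) ->
  -1 <= xk <= 1 ->
  (forall m, is_argmin_eta m xk (astar m)) ->
  (forall m, zeros_of (S m) (astar m) (z m)) ->
  (forall m, zeros_of (S m) 0 (c m)) ->
  Un_cv (fun m =>
      sum_f_R0 (fun i => qweight (z m) m i xk * f (z m i)) m
    - sum_f_R0 (fun i => qweight (c m) m i xk * f (c m i)) m) 0.
Proof.
  intros HA Hf0 Hdf Hbd Hxk Harg Hz Hc eps Heps.
  destruct (cv_speed_pow_fact 2 (eps / (4 * A))) as [N HN].
  { apply Rdiv_lt_0_compat; lra. }
  exists N. intros n Hn. unfold R_dist. rewrite Rminus_0_r.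
  destruct (nodes_ok n (astar n) (z n) (proj1 (Harg n)) (Hz n)) as [Hz1 Hz2].
  destruct (nodes_ok n 0 (c n) ltac:(lra) (Hc n)) as [Hc1 Hc2].
  assert (Hb := step_bound f A df xk n (z n) (c n) Hf0 Hdf Hbd Hxk Hz1 Hz2 Hc1 Hc2).
  specialize (HN (S n) ltac:(lia)). unfold R_dist in HN. rewrite Rminus_0_r in HN.
  assert (Hq : 0 <= 2 ^ S n / INR (Factorial.fact (S n))).
  { apply Rdiv_le_0_compat; [apply pow_le; lra|apply lt_0_INR, Factorial.lt_O_fact]. }
  rewrite Rabs_right in HN by lra.
  eapply Rle_lt_trans; [exact Hb|].
  replace ((xk + 1) * (2 * (A * 2 ^ S n / INR (Factorial.fact (S n))))) with
    ((xk + 1) * (2 * A) * (2 ^ S n / INR (Factorial.fact (S n)))) by (unfold Rdiv; ring).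
  assert (H4 : (xk + 1) * (2 * A) <= 4 * A) by nra.
  apply Rle_lt_trans with (4 * A * (2 ^ S n / INR (Factorial.fact (S n)))).
  - apply Rmult_le_compat_r; auto.
  - replace eps with (4 * A * (eps / (4 * A))) by (field; lra).
    apply Rmult_lt_compat_l; lra.
Qed.
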